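(* Assume: (1) each $h_i$ is measurable in $\xi_i$ and continuously differentiable in $x_i$ for every fixed $x_{-i}\in X_{-i}$, $\xi_i\in\Xi_i$; (2) each $X_i$ is compact and convex and $h_i(\cdot,x_{-i},\xi_i)$ is convex for every $x_{-i},\xi_i$; (3) for each $i$, every distribution $\mathbb{Q}_i$ in agent $i$'s ambiguity set belongs to $\mathcal{M}(\Xi_i)$ and there is $a_i>1$ with $\mathbb{E}_{\mathbb{Q}_i}[\exp(\|\xi_i\|^{a_i})]<\infty$; (4) for every $i\in\mathcal{N}$ and $j\in\{1,\dots,n\}$ there is $L_{i,j}\ge0$ with $\big|\frac{\partial h_i(x,\xi_i)}{\partial x_i^{(j)}}-\frac{\partial h_i(x,\xi_i')}{\partial x_i^{(j)}}\big|\le L_{i,j}\|\xi_i-\xi_i'\|$ for all $x\in X$, $\xi_i,\xi_i'\in\Xi_i$. Let $\epsilon_i(K_i,\beta_i)\ge0$ be the radius used by agent $i$ and $\mathcal{W}_K(\hat{\mathbb{P}}_K)=\prod_{i=1}^N\mathbb{B}_{\epsilon_i(K_i,\beta_i)}(\hat{\mathbb{P}}_{K_i})$. Then for any $x$ in an open set $V\subset X$ and any $q_K=\mathrm{col}((q_{K_i})_i)\in\mathcal{W}_K(\hat{\mathbb{P}}_K)$, $$\|F_{q_K}(x)-F_{\mathbb{P}}(x)\|^2\le\rho_K:=\sum_{i=1}^N\sum_{j=1}^{n}L_{i,j}^2\big[\epsilon_i(K_i,\beta_i)+d_W(\hat{\mathbb{P}}_{K_i},\mathbb{P}_i)\big]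^2.$$
   Context: Agents $i\in\mathcal{N}=\{1,\dots,N\}$ choose $x_i=\mathrm{col}(x_i^{(1)},\dots,x_i^{(n)})\in X_i\subseteq\mathbb{R}^n$; $X=\prod_iX_i$, $x=\mathrm{col}((x_i)_i)$, $x_{-i}$ the others' decisions, $X_{-i}=\prod_{j\ne i}X_j$. Agent $i$'s cost is $h_i:\mathbb{R}^{nN}\times\Xi_i\to\mathbb{R}$ with uncertainty $\xi_i\in\Xi_i\subseteq\mathbb{R}^p$ whose true distribution is $\mathbb{P}_i$; $\mathbb{P}=\mathrm{col}((\mathbb{P}_i)_i)$. $\|\cdot\|$ is the Euclidean norm; $\mathcal{M}(\Xi_i)$ is the set of distributions on $\Xi_i$ with finite first moment; $d_W(\mathbb{Q}_1,\mathbb{Q}_2)=\inf_\Pi\int\|\xi_1-\xi_2\|\Pi(d\xi_1,d\xi_2)$ over couplings $\Pi$ of $\mathbb{Q}_1,\mathbb{Q}_2$. From $K_i$ samples $\xi_i^{(1)},\dots,\xi_i^{(K_i)}$, $\hat{\mathbb{P}}_{K_i}=\frac1{K_i}\sum_k\delta_{\xi_i^{(k)}}$, and $\mathbb{B}_\epsilon(\hat{\mathbb{P}}_{K_i})=\{\mathbb{Q}\in\mathcal{M}(\Xi_i):d_W(\hat{\mathbb{P}}_{K_i},\mathbb{Q})\le\epsilon\}$ is agent $i$'s ambiguity set. For a collection $q=\mathrm{col}((q_i)_i)$ of distributions, $F_q(x)=\mathrm{col}((\nabla_{x_i}\mathbb{E}_{q_i}[h_i(x_i,x_{-i},\xi_i)])_{i\in\mathcal{N}})$.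 *)

(* Defs.v *)
From HB Require Import structures.
From mathcomp Require Import all_boot all_order all_algebra.
From mathcomp Require Import all_classical all_reals all_analysis.
Set Implicit Arguments. Unset Strict Implicit. Unset Printing Implicit Defensive.
Import Order.TTheory GRing.Theory Num.Theory.
Import numFieldNormedType.Exports.
Local Open Scope classical_set_scope.
Local Open Scope ring_scope.

Definition Rp (R : realType) (p : nat) := g_sigma_algebraType (@open 'rV[R]_p).

Definition enorm (R : realType) (p : nat) (u : 'rV[R]_p) : R :=
  Num.sqrt (\sum_(k < p) (u ord0 k) ^+ 2).

Definition xi_dist (R : realType) (p : nat) (u v : Rp R p) : R :=
  enorm ((u : 'rV[R]_p) - (v : 'rV[R]_p)).

Definition distr_M (R : realType) (p : nat) (Xi : set (Rp R p))
  (Q : probability (Rp R p) R) : Prop :=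
  Q Xi = 1%E /\ (\int[Q]_(z in Xi) (enorm (z : 'rV[R]_p))%:E < +oo)%E.

Definition coupling (R : realType) (p : nat)
  (Q1 Q2 : set (Rp R p) -> \bar R) (Pi : probability (Rp R p * Rp R p)%type R) : Prop :=
  forall A : set (Rp R p), measurable A ->
    Pi (A `*` setT) = Q1 A /\ Pi (setT `*` A) = Q2 A.

Definition dW (R : realType) (p : nat) (Q1 Q2 : set (Rp R p) -> \bar R) : \bar R :=
  ereal_inf [set (\int[Pi]_z (xi_dist z.1 z.2)%:E)%E
            | Pi in [set Pi | coupling Q1 Q2 Pi]].

Definition empirical (R : realType) (p K : nat) (xi : 'I_K -> Rp R p)
  (A : set (Rp R p)) : \bar R :=
  ((K%:R)^-1%:E * \sum_(k < K) \d_(xi k) A)%E.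

Definition wball (R : realType) (p : nat) (Xi : set (Rp R p)) (eps : R)
  (Q0 : set (Rp R p) -> \bar R) : set (probability (Rp R p) R) :=
  [set Q | distr_M Xi Q /\ (dW Q0 Q <= eps%:E)%E].

Definition replace_row (R : realType) (N n : nat) (x : 'M[R]_(N, n)) (i : 'I_N)
  (y : 'rV[R]_n) : 'M[R]_(N, n) :=
  \matrix_(k, j) (if k == i then y ord0 j else x k j).

Definition expcost (R : realType) (p N n : nat) (Xi : set (Rp R p))
  (Q : probability (Rp R p) R) (h : 'M[R]_(N, n) -> Rp R p -> R)
  (x : 'M[R]_(N, n)) : R :=
  Rintegral Q Xi (h x).

(* component (i,j) of F_q(x) = d/dx_i^(j) E_{q_i}[h_i(x, xi_i)] *)
Definition Fcomp (R : realType) (p N n : nat) (Xi : 'I_N -> set (Rp R p))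
  (q : 'I_N -> probability (Rp R p) R)
  (h : 'I_N -> 'M[R]_(N, n) -> Rp R p -> R) (x : 'M[R]_(N, n))
  (i : 'I_N) (j : 'I_n) : R :=
  'D_(delta_mx i j) (expcost (Xi i) (q i) (h i)) x.

(* Main.v *)
Require Import Defs.
From HB Require Import structures.
From mathcomp Require Import all_boot all_order all_algebra.
From mathcomp Require Import all_classical all_reals all_analysis.
From mathcomp Require Import measurable_realfun.
From mathcomp Require Import ring lra.
Import Order.TTheory GRing.Theory Num.Theory.
Import numFieldNormedType.Exports.
Local Open Scope classical_set_scope.
Local Open Scope ring_scope.
Set Implicit Arguments. Unset Strict Implicit. Unset Printing Implicit Defensive.
Section Meas.
Context {R : realType} {p : nat}.

Lemma coord_cont (k : 'I_p) : continuous (fun u : 'rV[R]_p => u ord0 k).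
Proof.
move=> u A /nbhs_ballP[e /= e0 eA].
apply/nbhs_ballP; exists e => //= v [_ uv]; apply: eA; exact: uv.
Qed.

Lemma coord_meas (k : 'I_p) :
  measurable_fun [set: Rp R p] (fun z : Rp R p => (z : 'rV[R]_p) ord0 k).
Proof.
apply: (measurability _ (measurable_realfun.RGenOpens.measurableE R)) => /= _ [_ [x [y ->]] <-].
rewrite setTI; apply: sub_sigma_algebra.
apply: (@open_comp _ _ (fun u : 'rV[R]_p => u ord0 k)).
  by move=> u _; apply: coord_cont.
exact: itv_open.
Qed.


Lemma xi_dist_meas d (T : measurableType d) (a b : T -> Rp R p) :
  measurable_fun setT a -> measurable_fun setT b ->
  measurable_fun [set: T] (fun t => xi_dist (a t) (b t)).
Proof.
move=> ma mb; rewrite /xi_dist /enorm.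
change (measurable_fun setT (Num.sqrt \o (fun t =>
  \sum_(k < p) (((a t : 'rV[R]_p) - (b t : 'rV[R]_p)) ord0 k) ^+ 2))).
apply: measurableT_comp.
  exact: measurable_realfun.continuous_measurable_fun (@sqrt_continuous R).
apply: measurable_sum => k.
apply: measurable_realfun.measurable_funX.
have -> : (fun t => ((a t : 'rV[R]_p) - (b t : 'rV[R]_p)) ord0 k) =
          (fun t => (a t : 'rV[R]_p) ord0 k - (b t : 'rV[R]_p) ord0 k).
  by apply: funext => t; rewrite !mxE.
apply: measurable_realfun.measurable_funB.
  exact: measurableT_comp (coord_meas k) ma.
exact: measurableT_comp (coord_meas k) mb.
Qed.

Lemma xi_dist_ge0 (u w : Rp R p) : 0 <= xi_dist u w.
Proof. exact: sqrtr_ge0. Qed.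

Lemma xi_distC (u w : Rp R p) : xi_dist u w = xi_dist w u.
Proof.
rewrite /xi_dist /enorm; congr Num.sqrt; apply: eq_bigr => k _.
by rewrite !mxE -sqrrN opprB.
Qed.

End Meas.
Section PF.
Local Open Scope ereal_scope.
Context {R : realType} d1 d2 d3 (T1 : measurableType d1) (T2 : measurableType d2)
  (Y : measurableType d3) (m1 : {measure set T1 -> \bar R})
  (m2 : {measure set T2 -> \bar R}) (s1 : T1 -> Y) (s2 : T2 -> Y).
Hypotheses (ms1 : measurable_fun setT s1) (ms2 : measurable_fun setT s2).
Hypothesis H : forall A, measurable A -> m1 (s1 @^-1` A) = m2 (s2 @^-1` A).

Lemma PF0 (f : Y -> \bar R) : measurable_fun setT f -> (forall y, 0 <= f y) ->
  \int[m1]_x f (s1 x) = \int[m2]_x f (s2 x).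
Proof.
move=> mf f0.
have := ge0_integral_pushforward ms1 m1 measurableT mf (fun y _ => f0 y).
rewrite preimage_setT => <-.
have := ge0_integral_pushforward ms2 m2 measurableT mf (fun y _ => f0 y).
rewrite preimage_setT => <-.
apply: eq_measure_integral => A mA _; exact: H.
Qed.

Lemma PF_int (f : Y -> \bar R) : measurable_fun setT f ->
  m1.-integrable setT (f \o s1) -> m2.-integrable setT (f \o s2).
Proof.
move=> mf /integrableP[_ fi]; apply/integrableP; split.
  exact: measurableT_comp.
rewrite -(PF0 (f := fun y => `|f y|)) //.
exact: measurableT_comp.
Qed.

Lemma PF (f : Y -> \bar R) : measurable_fun setT f ->
  m1.-integrable setT (f \o s1) ->
  \int[m1]_x f (s1 x) = \int[m2]_x f (s2 x).
Proof.
move=> mf i1.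
have i2 := PF_int mf i1.
have := @integral_pushforward _ _ _ _ _ _ ms1 m1 setT f mf; rewrite preimage_setT => /(_ i1 measurableT) <-.
have := @integral_pushforward _ _ _ _ _ _ ms2 m2 setT f mf; rewrite preimage_setT => /(_ i2 measurableT) <-.
apply: eq_measure_integral => A mA _; exact: H.
Qed.

End PF.
Section Split.
Local Open Scope ereal_scope.
Context {R : realType} d (T : measurableType d) (mu : {measure set T -> \bar R}).
Variables (S : set T) (mS : measurable S) (N0 : mu (~` S) = 0).

Lemma split0 (f : T -> \bar R) : measurable_fun setT f ->
  \int[mu]_x f x = \int[mu]_(x in S) f x.
Proof.
move=> mf; have mCS : measurable (~` S) by exact: measurableC.
rewrite -(setUv S) integral_setU //.
- by rewrite (null_set_integral mCS) ?adde0 //; exact: measurable_funTS.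
- by rewrite setUv.
- by rewrite /disj_set setICr.
Qed.

Lemma split_int (f : T -> \bar R) : measurable_fun setT f ->
  mu.-integrable S f -> mu.-integrable setT f.
Proof.
move=> mf /integrableP[_ fi]; apply/integrableP; split => //.
rewrite (split0 (f := fun x => `|f x|)) //.
exact: measurableT_comp.
Qed.
End Split.

Lemma int_fin {R : realType} d (T : measurableType d) (mu : {measure set T -> \bar R})
  (D : set T) (f : T -> \bar R) :
  measurable D -> mu.-integrable D f -> (\int[mu]_(x in D) f x)%E \is a fin_num.
Proof.
move=> mD /integrableP[mf fi]; rewrite fin_num_abs.
exact: le_lt_trans (le_abse_integral mu mD mf) fi.
Qed.

Section Coupling.
Local Open Scope ereal_scope.
Context {R : realType} {p : nat}.
Variables (Xi : set (Rp R p)) (mXi : measurable Xi) (K : nat) (xi : 'I_K -> Rp R p).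
Hypothesis Hxi : forall k, Xi (xi k).

Let Phat := empirical xi.

Lemma emp_null (A : set (Rp R p)) : (forall k, ~ A (xi k)) -> Phat A = 0.
Proof.
move=> nA; rewrite /Phat /empirical big1 ?mule0 // => k _.
by rewrite diracE memNset.
Qed.

Lemma pre_fst (A : set (Rp R p)) :
  (@fst (Rp R p) (Rp R p)) @^-1` A = A `*` setT.
Proof. by rewrite eqEsubset; split => [[a b]|[a b] []]. Qed.

Lemma pre_snd (A : set (Rp R p)) :
  (@snd (Rp R p) (Rp R p)) @^-1` A = setT `*` A.
Proof. by rewrite eqEsubset; split => [[a b]|[a b] []]. Qed.

Lemma set1_meas (a : Rp R p) : measurable [set a].
Proof.
rewrite -(setCK [set a]); apply: measurableC; apply: sub_sigma_algebra.
rewrite openC.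
exact: (@accessible_closed_set1 'rV[R]_p (hausdorff_accessible (@norm_hausdorff _ _))).
Qed.

Definition Sfin := \bigcup_(k in [set: 'I_K]) [set xi k].

Lemma mSfin : measurable Sfin.
Proof. by apply: fin_bigcup_measurable; [exact: finite_finset|move=> k _; exact: set1_meas]. Qed.

Variable (Q : probability (Rp R p) R) (Pi : probability (Rp R p * Rp R p)%type R).
Hypothesis cpl : coupling Phat Q Pi.

Lemma cpl_fst A : measurable A -> Pi (fst @^-1` A) = Phat A.
Proof. by move=> mA; rewrite pre_fst; case: (cpl mA). Qed.

Lemma cpl_snd A : measurable A -> Pi (snd @^-1` A) = Q A.
Proof. by move=> mA; rewrite pre_snd; case: (cpl mA). Qed.

Lemma cpl_nullS : Pi (~` (Sfin `*` [set: Rp R p])) = 0.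
Proof.
have -> : ~` (Sfin `*` [set: Rp R p]) = fst @^-1` (~` Sfin).
  by rewrite eqEsubset; split => [[a b]|[a b]] /=; rewrite /setX /=; tauto.
transitivity (Phat (~` Sfin)); first exact: cpl_fst (measurableC mSfin).
apply: emp_null => k /=; apply; by exists k.
Qed.

Lemma cpl_nullXi : Q Xi = 1 -> Pi (~` (Xi `*` Xi)) = 0.
Proof.
move=> QXi.
have -> : ~` (Xi `*` Xi) = (@fst (Rp R p) (Rp R p)) @^-1` (~` Xi) `|` (@snd (Rp R p) (Rp R p)) @^-1` (~` Xi).
  rewrite eqEsubset; split => [[a b]|[a b]] /=; rewrite /setX /setU /=.
    by move/not_andP.
  by move=> [] ?; apply/not_andP; [left|right].
have mC : measurable (~` Xi) by exact: measurableC.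
apply: null_set_setU.
- by rewrite -[X in measurable X]setTI; exact: measurable_fst.
- by rewrite -[X in measurable X]setTI; exact: measurable_snd.
- by transitivity (Phat (~` Xi)); [exact: cpl_fst|apply: emp_null => k; apply].
- by transitivity (Q (~` Xi)); [exact: cpl_snd|rewrite probability_setC // QXi subee].
Qed.

End Coupling.

Section KR.
Local Open Scope ereal_scope.
Context {R : realType} {p : nat}.
Variables (Xi : set (Rp R p)) (mXi : measurable Xi) (K : nat) (xi : 'I_K -> Rp R p).
Hypothesis Hxi : forall k, Xi (xi k).
Variables (phi : Rp R p -> R) (L : R).
Hypotheses (L0 : (0 <= L)%R) (mphi : measurable_fun Xi phi)
  (lip : forall z z', Xi z -> Xi z' -> (`|phi z - phi z'| <= L * xi_dist z z')%R).

Let psi : Rp R p -> \bar R := (EFin \o phi) \_ Xi.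

Definition cost (Pi : probability (Rp R p * Rp R p)%type R) :=
  \int[Pi]_z (xi_dist z.1 z.2)%:E.

Let mpsi : measurable_fun setT psi.
Proof.
have h : measurable_fun (setT `&` Xi) (EFin \o phi).
  by rewrite setTI; exact/measurable_EFinP.
exact: (proj1 (@measurable_restrict _ _ _ _ Xi setT (EFin \o phi) mXi measurableT) h).
Qed.

Let mdist : measurable_fun [set: (Rp R p * Rp R p)%type]
  (fun z : (Rp R p * Rp R p)%type => (xi_dist z.1 z.2)%:E).
Proof. exact/measurable_EFinP/xi_dist_meas. Qed.

Lemma cost_ge0 Pi : 0 <= cost Pi.
Proof. by apply: integral_ge0 => z _; rewrite lee_fin xi_dist_ge0. Qed.

Lemma KRc (Q : probability (Rp R p) R) Pi : coupling (empirical xi) Q Pi -> Q Xi = 1 ->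
  Q.-integrable Xi (EFin \o phi) -> cost Pi < +oo ->
  [/\ Pi.-integrable setT (psi \o snd), Pi.-integrable setT (psi \o fst),
   \int[Pi]_z psi z.2 = \int[Q]_(z in Xi) (phi z)%:E &
   `| \int[Pi]_z psi z.2 - \int[Pi]_z psi z.1 | <= L%:E * cost Pi ].
Proof.
move=> cpl QXi iQ cf.
have Hs A : measurable A -> Q (id @^-1` A) = Pi (snd @^-1` A).
  by move=> mA; rewrite preimage_id (cpl_snd cpl mA).
have iQT : Q.-integrable setT (psi \o id) by exact/(integrable_mkcond _ mXi).1.
have i2 : Pi.-integrable setT (psi \o snd).
  exact: (PF_int (@measurable_id _ _ setT) measurable_snd Hs mpsi iQT).
have e2 : \int[Pi]_z psi z.2 = \int[Q]_(z in Xi) (phi z)%:E.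
  rewrite -(PF (@measurable_id _ _ setT) measurable_snd Hs mpsi iQT).
  by rewrite [RHS]integral_mkcond.
have icost : Pi.-integrable setT (fun z : (Rp R p * Rp R p)%type => (xi_dist z.1 z.2)%:E).
  apply/integrableP; split => //.
  under eq_integral => z _ do rewrite gee0_abs ?lee_fin ?xi_dist_ge0 //.
  exact: cf.
have mS : measurable (Xi `*` Xi) by exact: measurableX.
have N0 := cpl_nullXi mXi Hxi cpl QXi.
have mpf : measurable_fun [set: (Rp R p * Rp R p)%type] (psi \o fst) := measurableT_comp mpsi measurable_fst.
have mps : measurable_fun [set: (Rp R p * Rp R p)%type] (psi \o snd) := measurableT_comp mpsi measurable_snd.
have Spsi z : (Xi `*` Xi) z -> psi z.1 = (phi z.1)%:E /\ psi z.2 = (phi z.2)%:E.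
  by case=> h1 h2; rewrite /psi !patchT ?inE.
have i1 : Pi.-integrable setT (psi \o fst).
  apply: (split_int mS N0 mpf).
  apply: (@le_integrable _ _ _ _ _ mS _
     (fun z => `|psi z.2| + (L * xi_dist z.1 z.2)%:E)).
  - exact: measurable_funTS.
  - move=> z Sz; have [E1 E2] := Spsi z Sz; rewrite /= E1 E2.
    rewrite (@gee0_abs _ (_ + _)); last first.
      by rewrite adde_ge0 // lee_fin mulr_ge0 // xi_dist_ge0.
    rewrite /= lee_fin.
    have -> : phi z.1 = (phi z.2 + (phi z.1 - phi z.2))%R by rewrite addrC subrK.
    apply: (le_trans (ler_normD _ _)); rewrite lerD2l.
    exact: lip (proj1 Sz) (proj2 Sz).
  - apply: (integrableS measurableT) => //.
    apply: integrableD => //; first exact: (integrable_abse i2).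
    under eq_fun do rewrite EFinM.
    exact: integrableZl.
split => //.
rewrite -integralB //.
apply: (le_trans (le_abse_integral _ _ _)) => //; first exact: emeasurable_funB.
rewrite (split0 mS N0); last exact/measurableT_comp/emeasurable_funB.
apply: (@le_trans _ _ (\int[Pi]_(z in Xi `*` Xi) (L * xi_dist z.1 z.2)%:E)).
  apply: ge0_le_integral => //.
  - apply/measurable_funTS/measurableT_comp => //; exact: emeasurable_funB.
  - by apply/measurable_funTS/measurable_EFinP/measurable_funM => //; exact/measurable_EFinP.
  - move=> z Sz; have [E1 E2] := Spsi z Sz.
    rewrite E1 E2 -EFinB /= lee_fin xi_distC.
    exact: lip (proj2 Sz) (proj1 Sz).
apply: (@le_trans _ _ (\int[Pi]_z (L * xi_dist z.1 z.2)%:E)).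
  apply: ge0_subset_integral => //.
  - by apply/measurable_EFinP/measurable_funM => //; exact/measurable_EFinP.
  - by move=> z _; rewrite lee_fin mulr_ge0 // xi_dist_ge0.
under eq_integral do rewrite EFinM.
by rewrite integralZl.
Qed.


Lemma dW_ge0 (Q : probability (Rp R p) R) : 0 <= dW (empirical xi) Q.
Proof.
apply/ereal_infP => _ [Pi _ <-].
by apply: integral_ge0 => z _; rewrite lee_fin xi_dist_ge0.
Qed.

Lemma get_cpl (Q : probability (Rp R p) R) (a del : R) : (0 < del)%R ->
  dW (empirical xi) Q <= a%:E ->
  exists Pi, coupling (empirical xi) Q Pi /\ cost Pi < (a + del)%:E.
Proof.
move=> d0 dWa.
have fin : dW (empirical xi) Q \is a fin_num.
  by rewrite ge0_fin_numE ?dW_ge0 // (le_lt_trans dWa) ?ltry.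
have [_ [Pi cPi <-] lt] := lb_ereal_inf_adherent d0 fin.
exists Pi; split => //; apply: (lt_le_trans lt).
by rewrite EFinD leeD2r.
Qed.

Lemma KR (Q1 Q2 : probability (Rp R p) R) (a b : R) :
  Q1 Xi = 1 -> Q2 Xi = 1 ->
  Q1.-integrable Xi (EFin \o phi) -> Q2.-integrable Xi (EFin \o phi) ->
  dW (empirical xi) Q1 <= a%:E -> dW (empirical xi) Q2 <= b%:E ->
  (`|Rintegral Q1 Xi phi - Rintegral Q2 Xi phi| <= L * (a + b))%R.
Proof.
move=> Q1Xi Q2Xi iQ1 iQ2 d1 d2.
apply/ler_addgt0Pr => e e0.
pose c := (2 * L + 1)%R.
have c0 : (0 < c)%R by rewrite /c ltr_wpDl // mulr_ge0.
pose del := (e / c)%R.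
have del0 : (0 < del)%R by rewrite divr_gt0.
have [P1 [cp1 h1]] := get_cpl del0 d1.
have [P2 [cp2 h2]] := get_cpl del0 d2.
have cf1 : cost P1 < +oo by apply: (lt_trans h1); exact: ltry.
have cf2 : cost P2 < +oo by apply: (lt_trans h2); exact: ltry.
have [i12 i11 e1 b1] := KRc cp1 Q1Xi iQ1 cf1.
have [i22 i21 e2 b2] := KRc cp2 Q2Xi iQ2 cf2.
have H12 A : measurable A -> P1 (fst @^-1` A) = P2 (fst @^-1` A).
  by move=> mA; rewrite (cpl_fst cp1 mA) (cpl_fst cp2 mA).
have e3 := PF measurable_fst measurable_fst H12 mpsi i11.
have f11 := int_fin measurableT i11.
have f12 := int_fin measurableT i12.
have f22 := int_fin measurableT i22.
have fc1 : cost P1 \is a fin_num by rewrite ge0_fin_numE ?cost_ge0.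
have fc2 : cost P2 \is a fin_num by rewrite ge0_fin_numE ?cost_ge0.
rewrite /Rintegral -e1 -e2.
move: b1 b2 h1 h2; rewrite -e3.
rewrite -(fineK f11) -(fineK f12) -(fineK f22) -(fineK fc1) -(fineK fc2).
rewrite -!EFinB -!EFinM /= !lee_fin !lte_fin => b1 b2 h1 h2.
move: b1 b2 h1 h2.
move: (fine (\int[P1]_x psi x.2)) (fine (\int[P2]_x psi x.2)) (fine (\int[P1]_x psi x.1))
  (fine (cost P1)) (fine (cost P2)) => x1 x2 w k1 k2 b1 b2 h1 h2.
have hd : e = (del * (2 * L + 1))%R by rewrite /del /c divfK // gt_eqF.
have t : (`|x1 - x2| <= `|x1 - w| + `|x2 - w|)%R.
  have -> : (x1 - x2 = (x1 - w) - (x2 - w))%R by ring.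
  exact: ler_normB.
have t1 : (L * k1 <= L * (a + del))%R by rewrite ler_wpM2l // ltW.
have t2 : (L * k2 <= L * (b + del))%R by rewrite ler_wpM2l // ltW.
have d0 := ltW del0.
apply: (le_trans t); rewrite hd; nra.
Qed.

End KR.

Section FM.
Local Open Scope ereal_scope.
Context {R : realType} {p : nat}.
Variables (Xi : set (Rp R p)) (mXi : measurable Xi) (K : nat) (xi : 'I_K -> Rp R p).
Variable (k0 : 'I_K).

Definition mind (z : Rp R p) : R :=
  \big[Order.min/xi_dist z (xi k0)]_(k < K) xi_dist z (xi k).

Lemma mind_le z k : (mind z <= xi_dist z (xi k))%R.
Proof. exact: bigmin_le. Qed.

Lemma mind_attained z : exists k, mind z = xi_dist z (xi k).
Proof.
rewrite /mind; apply: (big_ind (fun v => exists k, v = xi_dist z (xi k))).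
- by exists k0.
- move=> u w [k1 ->] [k2 ->].
  by case: (leP (xi_dist z (xi k1)) (xi_dist z (xi k2))) => _; [exists k1|exists k2].
- by move=> k _; exists k.
Qed.

Lemma mind_ge0 z : (0 <= mind z)%R.
Proof. by have [k ->] := mind_attained z; exact: xi_dist_ge0. Qed.

Lemma mind_meas : measurable_fun [set: Rp R p] mind.
Proof.
rewrite /mind; elim: (index_enum _) => [|k s IH].
  under eq_fun do rewrite big_nil.
  by apply: xi_dist_meas => //; exact: measurable_cst.
under eq_fun do rewrite big_cons.
apply: (measurable_minr (f := fun z => xi_dist z (xi k))) => //.
by apply: xi_dist_meas => //; exact: measurable_cst.
Qed.

Lemma FM (Q : probability (Rp R p) R) (a : R) :
  dW (empirical xi) Q <= a%:E -> Q.-integrable Xi (fun z => (mind z)%:E).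
Proof.
move=> dWa.
have [Pi [cpl cf]] := get_cpl (ltr01 : (0 < 1 :> R)%R) dWa.
have mm : measurable_fun [set: Rp R p] (fun z => (mind z)%:E).
  apply/measurable_EFinP. exact: mind_meas.
apply/integrableP; split; first exact: measurable_funTS.
under eq_integral do rewrite gee0_abs ?lee_fin ?mind_ge0 //.
apply: (le_lt_trans _ (lt_trans cf (ltry _))).
apply: (le_trans (ge0_subset_integral Q mXi measurableT mm _ (@subsetT _ Xi))).
  by move=> z _; rewrite lee_fin mind_ge0.
have Hs A : measurable A -> Q (id @^-1` A) = Pi (snd @^-1` A).
  by move=> mA; rewrite preimage_id (cpl_snd cpl mA).
rewrite (PF0 (@measurable_id _ _ setT) measurable_snd Hs mm); last first.
  by move=> z; rewrite lee_fin mind_ge0.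
have mS : measurable (Sfin xi `*` [set: Rp R p]) by exact: measurableX (mSfin xi) measurableT.
rewrite (split0 mS (cpl_nullS cpl)); last exact: (measurableT_comp mm measurable_snd).
apply: (le_trans (ge0_le_integral _ mS _ _ _ _ (f2 := fun z => (xi_dist z.1 z.2)%:E))).
- by move=> z _; rewrite lee_fin mind_ge0.
- exact: measurable_funTS (measurableT_comp mm measurable_snd).
- by apply: measurable_funTS; apply/measurable_EFinP; exact: xi_dist_meas measurable_fst measurable_snd.
- move=> [z1 z2] [[k _ /= ->] _] /=; rewrite lee_fin xi_distC; exact: mind_le.
apply: ge0_subset_integral => //.
- by apply/measurable_EFinP; exact: xi_dist_meas measurable_fst measurable_snd.
- by move=> z _; rewrite lee_fin xi_dist_ge0.
Qed.

End FM.

Section Shift.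
Context {R : realType} {V W : normedModType R}.

Lemma quot_shift (F : V -> W) (a e : V) (t : R) :
  (fun s : R => s^-1 *: (((fun s0 : R => F (s0 *: e + a)) \o shift t) (s *: 1) -
       F (t *: e + a))) =
  (fun s : R => s^-1 *: ((F \o shift (t *: e + a)) (s *: e) - F (t *: e + a))).
Proof.
apply: funext => s /=; congr (_ *: (F _ - _)).
by rewrite scalerDl addrA; congr (_ *: _ + _ + _); exact: mulr1.
Qed.

Lemma D1_shift (F : V -> W) (a e : V) (t : R) :
  'D_1 (fun s : R => F (s *: e + a)) t = 'D_e F (t *: e + a).
Proof. by rewrite /derive quot_shift. Qed.

Lemma derivable1_shift (F : V -> W) (a e : V) (t : R) :
  derivable F (t *: e + a) e -> derivable (fun s : R => F (s *: e + a)) t 1.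
Proof. by rewrite /derivable quot_shift. Qed.

End Shift.

Section Deriv.
Context {R : realType} {N n p : nat}.
Variables (Xi : set (Rp R p)) (mXi : measurable Xi).
Variables (H : 'M[R]_(N, n) -> Rp R p -> R) (i : 'I_N) (j : 'I_n)
  (x : 'M[R]_(N, n)) (V : set 'M[R]_(N, n)) (L : R).

Let v : 'M[R]_(N, n) := delta_mx i j.
Let e : 'rV[R]_n := delta_mx ord0 j.

Hypotheses (L0 : 0 <= L) (Vo : open V) (Vx : V x).
Hypothesis hmeas : forall t : R, measurable_fun Xi (H (t *: v + x)).
Hypothesis hdiff : forall z, Xi z -> forall w : 'rV[R]_n,
  differentiable (fun w' => H (replace_row x i w') z) w.
Hypothesis hcont : forall z, Xi z ->
  continuous (fun w : 'rV[R]_n => 'D_e (fun w' => H (replace_row x i w') z) w).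
Hypothesis hlip : forall y z z', V y -> Xi z -> Xi z' ->
  `|'D_v (fun y' => H y' z) y - 'D_v (fun y' => H y' z') y| <= L * xi_dist z z'.

Definition ff (t : R) (z : Rp R p) := H (t *: v + x) z.
Definition gg (z : Rp R p) := 'D_v (fun y' => H y' z) x.

Lemma repl (s : R) : replace_row x i (s *: e + row i x) = s *: v + x.
Proof.
apply/matrixP => a b; rewrite /replace_row !mxE eqxx /=.
by case: eqP => [->|_] //=; rewrite mulr0 add0r.
Qed.

Lemma ffE z : (fun s => ff s z) =
  (fun s : R => (fun w' => H (replace_row x i w') z) (s *: e + row i x)).
Proof. by apply: funext => s; rewrite repl. Qed.

Lemma derf z t : Xi z -> derivable (fun s => ff s z) t 1.
Proof.
move=> Xz; rewrite ffE.
apply: (@derivable1_shift _ _ _ (fun w' => H (replace_row x i w') z) (row i x) e t).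
exact/diff_derivable/hdiff.
Qed.

Lemma d1E z t : 'D_1 (fun s => ff s z) t = 'D_v (fun y' => H y' z) (t *: v + x).
Proof. exact: (D1_shift (fun y' => H y' z) x v t). Qed.

Lemma d1cont z : Xi z -> continuous (fun t => 'D_1 (fun s => ff s z) t).
Proof.
move=> Xz; rewrite ffE.
have -> : (fun t => 'D_1 (fun s : R => (fun w' => H (replace_row x i w') z)
                           (s *: e + row i x)) t) =
  (fun t => 'D_e (fun w' => H (replace_row x i w') z) (t *: e + row i x)).
  by apply: funext => t; exact: (@D1_shift _ _ _ (fun w' => H (replace_row x i w') z) (row i x) e t).
move=> t; apply: (@continuous_comp _ _ _ (fun t : R => t *: e + row i x)
  (fun w => 'D_e (fun w' => H (replace_row x i w') z) w)); last exact: hcont.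
apply: cvgD; last exact: cvg_cst.
exact: scalel_continuous.
Qed.

Lemma exists_r : exists2 r : R, 0 < r & forall t : R, `|t| < r -> V (t *: v + x).
Proof.
have c0 : {for 0, continuous (fun t : R => t *: v + x)}.
  apply: cvgD; last exact: cvg_cst.
  exact: scalel_continuous.
have : nbhs ((fun t : R => t *: v + x) 0) V.
  by rewrite scale0r add0r; apply: open_nbhs_nbhs; split.
move=> /c0 /nbhs_ballP[r /= r0 rV].
exists r => // t tr; apply: rV.
by rewrite -ball_normE /= sub0r normrN.
Qed.


Variables (K : nat) (xi : 'I_K -> Rp R p) (k0 : 'I_K).
Hypothesis Hxi : forall k, Xi (xi k).
Variables (r : R) (r0 : 0 < r) (hr : forall t : R, `|t| < r -> V (t *: v + x)).

Lemma exists_C : exists C : R, 0 <= C /\ forall z t, Xi z -> `|t| <= r / 2 ->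
  `|'D_1 (fun s => ff s z) t| <= C + L * mind xi k0 z.
Proof.
have r2 : 0 < r / 2 by rewrite divr_gt0.
have r2r : r / 2 < r by rewrite ltr_pdivrMr // ltr_pMr // ltr1n.
have hk k : exists c : R, forall t, t \in `[-(r/2), r/2] ->
    `|'D_1 (fun s => ff s (xi k)) t| <= c.
  have le : -(r/2) <= r/2 by lra.
  have ct : {within `[-(r/2), r/2], continuous (fun t => `|'D_1 (fun s => ff s (xi k)) t|)}.
    apply: continuous_subspaceT => s.
    apply: (@continuous_comp _ _ _ (fun t => 'D_1 (fun s => ff s (xi k)) t) Num.Def.normr).
      exact: d1cont.
    exact: norm_continuous.
  have [c _ hc] := EVT_max le ct.
  by exists `|'D_1 (fun s => ff s (xi k)) c|.
have [Cf hCf] := choice hk.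
exists (\sum_k `|Cf k|); split; first by apply: sumr_ge0 => k _.
move=> z t Xz tr; have [k mk] := mind_attained xi k0 z.
rewrite mk.
have tin : t \in `[-(r/2), r/2] by rewrite in_itv /= -ler_norml.
have vin : V (t *: v + x) by apply: hr; lra.
have h1 : `|'D_1 (fun s => ff s (xi k)) t| <= \sum_k `|Cf k|.
  apply: (le_trans (hCf k t tin)); apply: (le_trans (ler_norm _)).
  rewrite (bigD1 k) //=; apply: ler_wpDr => //; exact: sumr_ge0.
have h2 : `|'D_1 (fun s => ff s z) t - 'D_1 (fun s => ff s (xi k)) t| <= L * xi_dist z (xi k).
  by rewrite !d1E; exact: hlip.
have -> : 'D_1 (fun s => ff s z) t =
  'D_1 (fun s => ff s (xi k)) t + ('D_1 (fun s => ff s z) t - 'D_1 (fun s => ff s (xi k)) t).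
  by rewrite addrC subrK.
apply: (le_trans (ler_normD _ _)); exact: lerD.
Qed.


Variables (C : R) (C0 : 0 <= C).
Hypothesis hC : forall z t, Xi z -> `|t| <= r / 2 ->
  `|'D_1 (fun s => ff s z) t| <= C + L * mind xi k0 z.

Lemma gg_meas : measurable_fun Xi gg.
Proof.
apply: (measurable_fun_cvg (h := fun m z => (harmonic m)^-1 * (ff (harmonic m) z - ff 0 z))).
  move=> m; apply: measurable_funM; first exact: measurable_cst.
  apply: measurable_funB; [exact: hmeas|exact: hmeas].
move=> z Xz.
have dz : derivable (fun s => ff s z) 0 1 := @derf z 0 Xz.
have hn : (forall m, harmonic m != 0 :> R) /\ harmonic m @[m --> \oo] --> (0 : R).
  split; last exact: cvg_harmonic.
  by move=> m; rewrite /harmonic invr_eq0 pnatr_eq0.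
have := (cvgr_dnbhsP _ _ _).1 dz harmonic hn.
have -> : gg z = 'D_1 (fun s => ff s z) 0.
  by rewrite d1E scale0r add0r.
apply: cvg_trans; apply: near_eq_cvg; apply: nearW => m /=.
by rewrite /GRing.scale /= mulr1 addr0.
Qed.


Lemma deriv_int (Q : probability (Rp R p) R) :
  (forall y, V y -> Q.-integrable Xi (EFin \o H y)) ->
  Q.-integrable Xi (fun z => (L * mind xi k0 z)%:E) ->
  'D_v (expcost Xi Q H) x = Rintegral Q Xi gg /\ Q.-integrable Xi (EFin \o gg).
Proof.
move=> iH iM.
pose G z := C + L * mind xi k0 z.
have G0 z : 0 <= G z by rewrite addr_ge0 // mulr_ge0 // mind_ge0.
have iG : Q.-integrable Xi (EFin \o G).
  rewrite /G /comp; under eq_fun do rewrite EFinD.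
  apply: integrableD => //.
  exact: finite_measure_integrable_cst.
have r2 : 0 < r / 2 by rewrite divr_gt0.
have r2r : r / 2 < r by rewrite ltr_pdivrMr // ltr_pMr // ltr1n.
have Ia : `](- (r / 2)), (r / 2)[%classic (0 : R).
  by rewrite /= in_itv /= oppr_lt0 r2.
have Iab t : `](- (r / 2)), (r / 2)[%classic t -> `|t| < r / 2.
  by rewrite /= in_itv /= ltr_norml.
have intf t : `](- (r / 2)), (r / 2)[%classic t -> Q.-integrable Xi (EFin \o ff t).
  move=> /Iab tr; apply: iH; apply: hr; exact: lt_trans tr r2r.
have derf1 t z : `](- (r / 2)), (r / 2)[%classic t -> Xi z -> derivable (ff^~ z) t 1.
  by move=> _ Xz; exact: derf.
have Gub t z : `](- (r / 2)), (r / 2)[%classic t -> Xi z -> `|partial1of2 ff t z| <= G z.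
  by move=> /Iab tr Xz; rewrite partial1of2E; apply: hC => //; exact: ltW.
have cv := cvg_differentiation_under_integral mXi Ia intf derf1 G0 iG Gub.
have gE z : partial1of2 ff 0 z = gg z by rewrite partial1of2E d1E scale0r add0r.
split.
  rewrite /derive.
  have -> : (fun h : R => h^-1 *: ((expcost Xi Q H \o shift x) (h *: v) - expcost Xi Q H x)) =
    (fun h : R => h^-1 *: ((fun x' => \int[Q]_(y in Xi) ff x' y) (h + 0) -
                         (fun x' => \int[Q]_(y in Xi) ff x' y) 0)).
    by apply: funext => h; rewrite /expcost /ff /= addr0 scale0r add0r.
  rewrite (cvg_lim (@norm_hausdorff R R^o) cv).
  by apply: eq_Rintegral => z _; exact: gE.
apply: (le_integrable mXi _ _ iG).
  by apply/measurable_EFinP; exact: gg_meas.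
move=> z Xz; rewrite /comp /= !lee_fin (ger0_norm (G0 z)) -gE partial1of2E.
by apply: hC => //; rewrite normr0 ltW.
Qed.

End Deriv.

Lemma row_other {R : realType} {N n : nat} (x : 'M[R]_(N, n)) (i k : 'I_N) (j : 'I_n) (t : R) :
  k != i -> row k (t *: delta_mx i j + x) = row k x.
Proof.
move=> ki; apply/matrixP => a b; rewrite !mxE (negbTE ki) /= mulr0 add0r.
by [].
Qed.

Lemma term_bound {R : realType} {N n p : nat} (X : 'I_N -> set 'rV[R]_n)
  (Xi : set (Rp R p)) (H : 'M[R]_(N, n) -> Rp R p -> R)
  (P q : probability (Rp R p) R) (K : nat) (xi : 'I_K -> Rp R p)
  (eps L : R) (V : set 'M[R]_(N, n)) (x : 'M[R]_(N, n)) (i : 'I_N) (j : 'I_n) :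
  let XX := [set y : 'M[R]_(N, n) | forall k, X k (row k y)] in
  measurable Xi -> P Xi = 1%E -> (0 < K)%N -> (forall k, Xi (xi k)) -> 0 <= eps -> 0 <= L ->
  (forall y : 'M[R]_(N, n), (forall k, k != i -> X k (row k y)) ->
     measurable_fun Xi (H y) /\
     forall z : Rp R p, Xi z ->
       (forall w : 'rV[R]_n, differentiable (fun w' => H (replace_row y i w') z) w) /\
       (forall j : 'I_n, continuous
          (fun w : 'rV[R]_n => 'D_(delta_mx ord0 j) (fun w' => H (replace_row y i w') z) w))) ->
  (forall (y : 'M[R]_(N, n)) (z z' : Rp R p), XX y -> Xi z -> Xi z' ->
     `|'D_(delta_mx i j) (fun y' => H y' z) y - 'D_(delta_mx i j) (fun y' => H y' z') y|
       <= L * xi_dist z z') ->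
  (forall (y : 'M[R]_(N, n)), XX y ->
     q.-integrable Xi (fun z => (H y z)%:E) /\ P.-integrable Xi (fun z => (H y z)%:E)) ->
  open V -> V `<=` XX -> V x ->
  wball Xi eps (empirical xi) q ->
  (((('D_(delta_mx i j) (expcost Xi q H) x - 'D_(delta_mx i j) (expcost Xi P H) x) ^+ 2)%:E
   <= (L ^+ 2)%:E * (((eps)%:E + dW (empirical xi) P) * ((eps)%:E + dW (empirical xi) P)))%E).
Proof.
move=> XX mXi PXi Kpos Hxi eps0 L0 H1 Hlip Hint Vo VXX Vx [[qXi _] dq].
have Xx : XX x := VXX x Vx.
have oth t k : k != i -> X k (row k (t *: delta_mx i j + x)).
  by move=> ki; rewrite row_other //; exact: Xx.
have oth0 k : k != i -> X k (row k x) by move=> _; exact: Xx.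
have hmeas t : measurable_fun Xi (H (t *: delta_mx i j + x)) := (H1 _ (oth t)).1.
have hdiff z (Xz : Xi z) := ((H1 x oth0).2 z Xz).1.
have hcont z (Xz : Xi z) := ((H1 x oth0).2 z Xz).2 j.
have hlip y z z' : V y -> Xi z -> Xi z' -> _ := fun Vy => Hlip y z z' (VXX y Vy).
have [r r0 hr] := exists_r i j Vo Vx.
pose k0 := Ordinal Kpos.
have [C [C0 hC]] := exists_C hcont hlip k0 Hxi r0 hr.
have iHq y : V y -> q.-integrable Xi (EFin \o H y) by move=> Vy; exact: (Hint y (VXX y Vy)).1.
have iHP y : V y -> P.-integrable Xi (EFin \o H y) by move=> Vy; exact: (Hint y (VXX y Vy)).2.
have lipg z z' : Xi z -> Xi z' -> `|gg H i j x z - gg H i j x z'| <= L * xi_dist z z'.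
  by move=> Xz Xz'; exact: hlip.
have dP0 := dW_ge0 xi P.
case EP : (dW (empirical xi) P) dP0 => [b||] // b0.
  have dPb : (dW (empirical xi) P <= b%:E)%E by rewrite EP.
  have iMq : q.-integrable Xi (fun z => (L * mind xi k0 z)%:E).
    under eq_fun do rewrite EFinM.
    exact: integrableZl (FM mXi k0 dq).
  have iMP : P.-integrable Xi (fun z => (L * mind xi k0 z)%:E).
    under eq_fun do rewrite EFinM.
    exact: integrableZl (FM mXi k0 dPb).
  have [Dq iq] := deriv_int mXi L0 hmeas hdiff r0 hr C0 hC iHq iMq.
  have [DP iP] := deriv_int mXi L0 hmeas hdiff r0 hr C0 hC iHP iMP.
  rewrite Dq DP.
  have := KR mXi Hxi L0 (gg_meas hmeas hdiff) lipg qXi PXi iq iP dq dPb.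
  move: (\int[q]_(x0 in Xi) gg H i j x x0 - \int[P]_(x0 in Xi) gg H i j x x0) => d hd.
  rewrite -EFinD -!EFinM lee_fin.
  have /andP[h1 h2] : -(L * (eps + b)) <= d <= L * (eps + b) by rewrite -ler_norml.
  have M0 : 0 <= L * (eps + b) by rewrite mulr_ge0 // addr_ge0.
  have hp : 0 <= (L * (eps + b) - d) * (L * (eps + b) + d).
    by apply: mulr_ge0; lra.
  nra.
have := L0; rewrite le_eqVlt => /predU1P[Lz|Lpos]; last first.
  by rewrite addey // mulyy mulry gtr0_sg ?exprn_gt0 // mul1e leey.
subst L.
rewrite expr0n /= mul0e.
have iM (Q : probability (Rp R p) R) : Q.-integrable Xi (fun z => (0 * mind xi k0 z)%:E).
  under eq_fun do rewrite mul0r.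
  exact: finite_measure_integrable_cst.
have [Dq iq] := deriv_int mXi L0 hmeas hdiff r0 hr C0 hC iHq (iM q).
have [DP iP] := deriv_int mXi L0 hmeas hdiff r0 hr C0 hC iHP (iM P).
have gc z : Xi z -> gg H i j x z = gg H i j x (xi k0).
  move=> Xz; apply/eqP; rewrite -subr_eq0 -normr_le0.
  by have := lipg z (xi k0) Xz (Hxi k0); rewrite mul0r.
have Ic (Q : probability (Rp R p) R) : Q Xi = 1%E ->
    \int[Q]_(z in Xi) gg H i j x z = gg H i j x (xi k0).
  move=> QXi; rewrite (eq_Rintegral _ (g := cst (gg H i j x (xi k0)))); last first.
    by move=> z; rewrite inE => Xz; exact: gc.
  rewrite Rintegral_cst //; transitivity (gg H i j x (xi k0) * fine (1%E : \bar R)); last by rewrite mulr1.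
  by congr (_ * fine _); exact: QXi.
by rewrite Dq DP (Ic q qXi) (Ic P PXi) subrr expr0n.
Qed.

Unset Implicit Arguments.
Set Strict Implicit.
Set Printing Implicit Defensive.

Theorem lemma6 (R : realType) (N n p : nat)
  (X : 'I_N -> set 'rV[R]_n) (Xi : 'I_N -> set (Rp R p))
  (h : 'I_N -> 'M[R]_(N, n) -> Rp R p -> R)
  (P : 'I_N -> probability (Rp R p) R)
  (K : 'I_N -> nat) (xi : forall i : 'I_N, 'I_(K i) -> Rp R p)
  (eps : 'I_N -> R) (L : 'I_N -> 'I_n -> R)
  (V : set 'M[R]_(N, n)) (q : 'I_N -> probability (Rp R p) R)
  (x : 'M[R]_(N, n)) :
  let XX := [set y : 'M[R]_(N, n) | forall i, X i (row i y)] in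
  (* setting *)
  (forall i, measurable (Xi i)) ->
  (forall i, P i (Xi i) = 1%E) ->
  (forall i, (0 < K i)%N) ->
  (forall i k, Xi i (xi i k)) ->
  (forall i, 0 <= eps i) ->
  (* (1) measurability in xi and C^1 in x_i *)
  (forall i (y : 'M[R]_(N, n)), (forall k, k != i -> X k (row k y)) ->
     measurable_fun (Xi i) (h i y) /\
     forall z : Rp R p, Xi i z ->
       (forall w : 'rV[R]_n, differentiable (fun w' => h i (replace_row y i w') z) w) /\
       (forall j : 'I_n, continuous
          (fun w : 'rV[R]_n => 'D_(delta_mx ord0 j) (fun w' => h i (replace_row y i w') z) w))) ->
  (* (2) compact convex strategy sets, convex costs *)
  (forall i, compact (X i) /\ convex_set (X i : set (convex_lmodType 'rV[R]_n))) ->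
  (forall i (y : 'M[R]_(N, n)) (z : Rp R p), (forall k, k != i -> X k (row k y)) ->
     Xi i z ->
     convex_function (setT : set (convex_lmodType 'rV[R]_n))
       (fun w : convex_lmodType 'rV[R]_n => h i (replace_row y i w) z : R^o)) ->
  (* (3) light-tailed ambiguity sets *)
  (forall i, exists a : R, 1 < a /\
     forall Q, wball (Xi i) (eps i) (empirical (xi i)) Q ->
       distr_M (Xi i) Q /\
       (\int[Q]_(z in Xi i) (expR (enorm (z : 'rV[R]_p) `^ a))%:E < +oo)%E) ->
  (* (4) Lipschitz continuity of the partial gradients in xi *)
  (forall i j, 0 <= L i j) ->
  (forall i j (y : 'M[R]_(N, n)) (z z' : Rp R p), XX y -> Xi i z -> Xi i z' ->
     `|'D_(delta_mx i j) (fun y' => h i y' z) y - 'D_(delta_mx i j) (fun y' => h i y' z') y|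
       <= L i j * xi_dist z z') ->
  (* the expected costs are well defined (finite) on X *)
  (forall i (y : 'M[R]_(N, n)), XX y ->
     (q i).-integrable (Xi i) (fun z => (h i y z)%:E) /\
     (P i).-integrable (Xi i) (fun z => (h i y z)%:E)) ->
  (* x in an open V included in X, q in the product of Wasserstein balls *)
  open V -> V `<=` XX -> V x ->
  (forall i, wball (Xi i) (eps i) (empirical (xi i)) (q i)) ->
  ((\sum_(i < N) \sum_(j < n) (Fcomp Xi q h x i j - Fcomp Xi P h x i j) ^+ 2)%:E
   <= \sum_(i < N) \sum_(j < n)
        ((L i j ^+ 2)%:E * (((eps i)%:E + dW (empirical (xi i)) (P i)) *
                            ((eps i)%:E + dW (empirical (xi i)) (P i)))))%E.
Proof.
move=> XX mXi PXi Kpos Hxi eps0 H1 _ _ _ L0 Hlip Hint Vo VXX Vx Hq.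
rewrite -sumEFin; apply: lee_sum => i _; rewrite -sumEFin; apply: lee_sum => j _.
exact: (term_bound (mXi i) (PXi i) (Kpos i) (Hxi i) (eps0 i) (L0 i j) (H1 i)
  (Hlip i j) (Hint i) Vo VXX Vx (Hq i)).
Qed.
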